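(* Let $\mathbb{F}\in\{\mathbb{R},\mathbb{C}\}$, let $A_1,A_2,\ldots$ be a sequence of matrices in $\mathbb{F}^{n\times n}$, and let $\mu$ be a matrix norm on $\mathbb{F}^{n\times n}$. Suppose that $\sum_{i=1}^\infty(\max(\mu(A_i),1)-1)$ converges and that $\sum_{i=1}^\infty(1-\min(\mu(A_i),1))$ diverges. Then all general products from $A_1,A_2,\ldots$ converge to $0$: for every permutation $\sigma$ of the positive integers, every integer $p\ge0$, and every sequence $(C_{p,r})_{r\ge1}$ of general products as defined below, $\lim_{r\to\infty}C_{p,r}=0$.
   Context: A matrix norm is a submultiplicative norm on $\mathbb{F}^{n\times n}$. General products: given a permutation $\sigma$ of the positive integers, set $B_i=A_{\sigma(i)}$; for an integer $p\ge0$ and each $r\ge1$, $C_{p,r}$ is a product of the matrices $B_{p+1},\ldots,B_{p+r}$, each used exactly once, taken in some order (the order may be chosen arbitrarily and independently for each $r$). *)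

(* Defs.v *)
From HB Require Import structures.
From mathcomp Require Import all_boot all_order all_algebra all_fingroup.
From mathcomp Require Import all_classical all_reals all_analysis.
From mathcomp Require Import complex.
Set Implicit Arguments. Unset Strict Implicit. Unset Printing Implicit Defensive.
Import Order.TTheory GRing.Theory Num.Theory.
Import numFieldNormedType.Exports.
Local Open Scope ring_scope.
Local Open Scope classical_set_scope.

(* A matrix norm: a submultiplicative norm on F^{n x n}.  Its values are
   taken in F itself (they are nonnegative, hence real). *)
Definition matrix_norm (F : numFieldType) (n : nat) (mu : 'M[F]_n -> F) : Prop :=
  [/\ (forall A, 0 <= mu A),
      (forall A, mu A = 0 -> A = 0),
      (forall (c : F) A, mu (c *: A) = `|c| * mu A),
      (forall A B, mu (A + B) <= mu A + mu B)
    & (forall A B, mu (A *m B) <= mu A * mu B)].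

Definition mxprod (F : numFieldType) (n r : nat) (M : 'I_r -> 'M[F]_n) : 'M[F]_n :=
  \big[@mulmx F n n n / 1%:M]_(i < r) M i.

(* Sequences are 0-indexed: A 0 is the paper's A_1, sigma is a permutation
   of nat, B i = A (sigma i) is the paper's B_{i+1}, and for r >= 1,
   C r is a product of B p, ..., B (p + r - 1) (the paper's B_{p+1..p+r}),
   each used exactly once, in the order given by a permutation s of 'I_r. *)
Definition theorem3p2_prop (F : numFieldType) : Prop :=
  forall (n : nat) (A : nat -> 'M[F]_n) (mu : 'M[F]_n -> F),
    matrix_norm mu ->
    cvg (series (fun i => Num.max (mu (A i)) 1 - 1) @ \oo) ->
    ~ cvg (series (fun i => 1 - Num.min (mu (A i)) 1) @ \oo) ->
    forall (sigma : nat -> nat), bijective sigma ->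
    forall (p : nat) (C : nat -> 'M[F]_n),
      (forall r : nat, (0 < r)%N ->
         exists s : 'S_r, C r = mxprod (fun i : 'I_r => A (sigma (p + s i)%N))) ->
      C @ \oo --> (0 : 'M[F]_n).

(* Main.v *)
Require Import Defs.
From HB Require Import structures.
From mathcomp Require Import all_boot all_order all_algebra all_fingroup.
From mathcomp Require Import all_classical all_reals all_analysis.
From mathcomp Require Import complex ring.
Set Implicit Arguments. Unset Strict Implicit. Unset Printing Implicit Defensive.
Import Order.TTheory GRing.Theory Num.Theory.
Import numFieldNormedType.Exports.
Local Open Scope ring_scope.
Local Open Scope classical_set_scope.

Section Alg.
Variable F : numFieldType.

Lemma prod1p_le (s : seq nat) (x : nat -> F) : (forall j, 0 <= x j) ->
  (\prod_(j <- s) (1 + x j)) * (1 - \sum_(j <- s) x j) <= 1.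
Proof.
move=> x0; elim: s => [|k s IH]; first by rewrite !big_nil subr0 mulr1.
rewrite !big_cons.
set P := \prod_(j <- s) _ in IH *; set T := \sum_(j <- s) _ in IH *.
have P0 : 0 <= P by apply: prodr_ge0 => j _; rewrite addr_ge0.
have T0 : 0 <= T by apply: sumr_ge0.
have -> : (1 + x k) * P * (1 - (x k + T)) = P * (1 - T) - P * x k * (x k + T) by ring.
rewrite lerBlDr; apply: (le_trans IH); rewrite lerDl.
by rewrite !mulr_ge0 // addr_ge0.
Qed.

Lemma prod1m_le (s : seq nat) (x : nat -> F) : (forall j, 0 <= x j <= 1) ->
  (\prod_(j <- s) (1 - x j)) * (1 + \sum_(j <- s) x j) <= 1.
Proof.
move=> x0; elim: s => [|k s IH]; first by rewrite !big_nil addr0 mulr1.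
rewrite !big_cons.
set P := \prod_(j <- s) _ in IH *; set T := \sum_(j <- s) _ in IH *.
have P0 : 0 <= P by apply: prodr_ge0 => j _; rewrite subr_ge0; case/andP: (x0 j).
have T0 : 0 <= T by apply: sumr_ge0 => j _; case/andP: (x0 j).
have -> : (1 - x k) * P * (1 + (x k + T)) = P * (1 + T) - P * x k * (x k + T) by ring.
have [xk0 _] := andP (x0 k).
rewrite lerBlDr; apply: (le_trans IH); rewrite lerDl.
by rewrite !mulr_ge0 // addr_ge0.
Qed.

Lemma big_subset_split (R : Type) (idx : R) (op : Monoid.com_law idx)
  (s t : seq nat) (g : nat -> R) : uniq s -> uniq t -> {subset s <= t} ->
  \big[op/idx]_(j <- t) g j = op (\big[op/idx]_(j <- s) g j) (\big[op/idx]_(j <- t | j \notin s) g j).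
Proof.
move=> us ut st; rewrite (bigID (mem s)) /=; congr (op _ _).
rewrite -big_filter; apply: perm_big; apply: uniq_perm.
- exact: filter_uniq.
- exact: us.
by move=> j; rewrite mem_filter; apply/andP/idP => [[]//|js]; split => //; apply: st.
Qed.

Lemma sum_subset_le (s t : seq nat) (g : nat -> F) : uniq s -> uniq t -> {subset s <= t} ->
  (forall j, 0 <= g j) -> \sum_(j <- s) g j <= \sum_(j <- t) g j.
Proof.
move=> us ut st g0; rewrite (big_subset_split _ g us ut st) lerDl.
by apply: sumr_ge0.
Qed.

Lemma prod_subset_le (s t : seq nat) (g : nat -> F) : uniq s -> uniq t -> {subset s <= t} ->
  (forall j, 1 <= g j) -> \prod_(j <- s) g j <= \prod_(j <- t) g j.
Proof.
move=> us ut st g1; rewrite (big_subset_split _ g us ut st).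
have g0 j : 0 <= g j by apply: le_trans (g1 j).
rewrite ler_peMr //; first by apply: prodr_ge0.
by apply: (big_ind (fun v => 1 <= v)) => // x y; exact: mulr_ege1.
Qed.
End Alg.
Section Mx.
Variables (F : numFieldType) (n : nat) (mu : 'M[F]_n -> F).
Hypothesis hmu : matrix_norm mu.

Lemma mxprod_le r (M : 'I_r.+1 -> 'M[F]_n) :
  mu (mxprod M) <= \prod_(i < r.+1) mu (M i).
Proof.
case: hmu => mu0 _ _ _ muM.
elim: r M => [|r IH] M.
  by rewrite /mxprod !big_ord_recl !big_ord0 mulmx1 mulr1.
rewrite /mxprod [X in mu X <= _]big_ord_recl [X in _ <= X]big_ord_recl.
apply: le_trans (muM _ _) _; apply: ler_wpM2l => //; exact: IH.
Qed.

Lemma entry_mx (X : 'M[F]_n) i j :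
  delta_mx i i *m X *m delta_mx j j = X i j *: delta_mx i j.
Proof.
apply/matrixP => x y; rewrite !mxE.
rewrite (bigD1 j) //= big1 ?addr0; last first.
  by move=> l /negPf hl; rewrite !mxE hl /= mulr0.
rewrite !mxE (bigD1 i) //= big1 ?addr0; last first.
  by move=> k /negPf hk; rewrite !mxE hk andbF mul0r.
rewrite !mxE !eqxx !andbT.
by case: (x == i); case: (y == j); rewrite /= ?mulr1 ?mul1r ?mulr0 ?mul0r.
Qed.

Lemma mx_norm_bound : exists K, 0 <= K /\ forall X : 'M[F]_n, `|X| <= K * mu X.
Proof.
case: hmu => mu0 mudef muZ _ muM.
pose Kij (ij : 'I_n * 'I_n) := mu (delta_mx ij.1 ij.1) * mu (delta_mx ij.2 ij.2) / mu (delta_mx ij.1 ij.2).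
have K0 ij : 0 <= Kij ij by rewrite /Kij !mulr_ge0 // invr_ge0.
exists (\sum_ij Kij ij); split; first by apply: sumr_ge0.
move=> X; have -> : `|X| = mx_norm X by [].
have [X0|] := eqVneq (mx_norm X) 0.
  rewrite X0; apply: mulr_ge0 => //; exact: sumr_ge0.
move=> /mx_norm_neq0 [ij ->].
have hpos : 0 < mu (delta_mx ij.1 ij.2).
  rewrite lt_def mu0 andbT; apply/eqP => /mudef /matrixP /(_ ij.1 ij.2).
  by rewrite !mxE !eqxx /= => /eqP; rewrite oner_eq0.
have : `|X ij.1 ij.2| * mu (delta_mx ij.1 ij.2) <= mu (delta_mx ij.1 ij.1) * mu X * mu (delta_mx ij.2 ij.2).
  rewrite -muZ -entry_mx; apply: le_trans (muM _ _) _.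
  by apply: ler_wpM2r => //; apply: muM.
rewrite -ler_pdivlMr // => h; apply: le_trans h _.
apply: le_trans (_ : Kij ij * mu X <= _).
  by rewrite /Kij le_eqVlt; apply/orP; left; apply/eqP; ring.
apply: ler_wpM2r => //.
by rewrite (bigD1 ij) //= lerDl sumr_ge0.
Qed.
End Mx.

Section Core.
Variable F : numFieldType.
Hypothesis Hc : forall u : nat -> F, (forall i, 0 <= u i) ->
  (exists B, forall N, series u N <= B) -> cvg (series u @ \oo).

Lemma core : theorem3p2_prop F.
Proof.
move=> n A mu hmu Ha Hb sigma [tau st ts] p C HC.
have [mu0 _ _ _ _] := hmu.
pose m := fun i => mu (A i).
pose a := fun i => Num.max (m i) 1 - 1.
pose b := fun i => 1 - Num.min (m i) 1.
have Ha' : cvg (series a @ \oo) := Ha.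
have Hb' : ~ cvg (series b @ \oo) := Hb.
clear Ha Hb.
have mreal j : m j \is Num.real by exact: ger0_real (mu0 _).
have ha j : 0 <= a j.
  rewrite /a /Order.max; case: ifP => h; first by rewrite subrr.
  rewrite subr_ge0 real_leNgt ?h //.
have hb j : 0 <= b j <= 1.
  rewrite /b /Order.min; case: ifP => h.
    by rewrite subr_ge0 (ltW h) /= lerBlDr lerDl; exact: mu0.
  by rewrite subrr lexx ler01.
have hm j : m j <= (1 + a j) * (1 - b j).
  rewrite /a /b /Order.max /Order.min; case: ifP => h;
  by rewrite le_eqVlt; apply/orP; left; apply/eqP; ring.
have [K [K0 hK]] : exists K, 0 <= K /\ forall s, uniq s -> \prod_(j <- s) (1 + a j) <= K.
  have q0 : (0:F) < 4%:R^-1 by rewrite invr_gt0 ltr0n.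
  have [l hl] := (cvg_ex _).1 Ha'.
  have [N0 _ hN0] := cvgr_dist_lt _ _ hl _ q0.
  have tail M : (N0 <= M)%N -> \sum_(N0 <= j < M) a j <= 2%:R^-1.
    move=> hM.
    have S0 : 0 <= \sum_(N0 <= j < M) a j by apply: sumr_ge0.
    rewrite -(ger0_norm S0).
    have -> : \sum_(N0 <= j < M) a j = series a M - series a N0.
      by rewrite /series /= (big_cat_nat (leq0n N0) hM) /= addrC addrK.
    have -> : series a M - series a N0 = (l - series a N0) - (l - series a M) by ring.
    apply: le_trans (ler_normB _ _) _.
    have -> : (2%:R^-1 : F) = 4%:R^-1 + 4%:R^-1.
      by field.
    by apply: lerD; apply: ltW; apply: hN0 => /=.
  have pa0 (r : seq nat) : 0 <= \prod_(j <- r) (1 + a j).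
    by apply: prodr_ge0 => j _; rewrite addr_ge0.
  exists (2%:R * \prod_(0 <= j < N0) (1 + a j)); split.
    by rewrite mulr_ge0.
  move=> s us.
  pose M := maxn N0 (\max_(j <- s) j).+1.
  have hNM : (N0 <= M)%N by rewrite leq_maxl.
  have sub : {subset s <= index_iota 0 M}.
    move=> j js; rewrite mem_index_iota /= (leq_trans _ (leq_maxr _ _)) //.
    by rewrite ltnS; apply: leq_bigmax_seq.
  apply: le_trans (@prod_subset_le F s _ (fun j => 1 + a j) us (iota_uniq _ _) sub _) _.
    by move=> j; rewrite lerDl.
  rewrite (big_cat_nat (leq0n N0) hNM) /= mulrC; apply: ler_wpM2r; first exact: pa0.
  have h := prod1p_le (index_iota N0 M) ha.
  set P1 := \prod_(j <- _) _ in h *.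
  have P10 : 0 <= P1 by exact: pa0.
  have h2 : P1 * 2%:R^-1 <= 1.
    apply: le_trans h; apply: ler_wpM2l => //.
    rewrite lerBrDr -lerBrDl; apply: le_trans (tail _ hNM) _.
    by rewrite le_eqVlt; apply/orP; left; apply/eqP; field.
  by move: h2; rewrite ler_pdivrMr ?ltr0n // mul1r.
have hS r : uniq (map sigma (iota p r)).
  by rewrite map_inj_uniq ?iota_uniq //; exact: can_inj st.
have pb0 (r : seq nat) : 0 <= \prod_(j <- r) (1 - b j).
  by apply: prodr_ge0 => j _; rewrite subr_ge0; case/andP: (hb j).
have hCr r : (0 < r)%N -> mu (C r) <= K * \prod_(j <- map sigma (iota p r)) (1 - b j).
  move=> hr; apply: le_trans (_ : _ <= \prod_(j <- map sigma (iota p r)) m j) _.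
    case: r hr => // r _.
    have [s ->] := HC r.+1 erefl.
    apply: le_trans (mxprod_le hmu _) _.
    have -> : iota p r.+1 = map (addn p) (iota 0 r.+1) by rewrite -iotaDl addn0.
    rewrite big_map big_map.
    have -> : iota 0 r.+1 = index_iota 0 r.+1 by rewrite /index_iota subn0.
    rewrite big_mkord [X in _ <= X](reindex_inj (@perm_inj _ s)) /=.
    by rewrite le_eqVlt eqxx.
  apply: le_trans (_ : _ <= \prod_(j <- map sigma (iota p r)) ((1 + a j) * (1 - b j))) _.
    by apply: ler_prod => j _; rewrite mu0 hm.
  by rewrite big_split /=; apply: ler_wpM2r => //; apply: hK.
have he e : 0 < e -> exists R0, forall r, (R0 <= r)%N ->
    \prod_(j <- map sigma (iota p r)) (1 - b j) <= e.
  move=> e0.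
  pose B := e^-1 + p%:R.
  have : ~ (forall N, series b N <= B).
    by move=> h; apply: Hb'; apply: Hc => [j|]; [case/andP: (hb j) | exists B].
  move/existsNP => [N /negP hN].
  have sb0 N' : 0 <= series b N' by apply: sumr_ge0 => j _; case/andP: (hb j).
  have B0 : 0 <= B by rewrite addr_ge0 // invr_ge0 ltW.
  have hN' : B < series b N.
    by rewrite real_ltNge ?hN // ger0_real.
  exists (\max_(j <- iota 0 N) tau j).+1 => r hr.
  set T := \sum_(j <- map sigma (iota p r)) b j.
  have hb1 j : b j <= 1 by case/andP: (hb j).
  have hT : e^-1 < T.
    have h1 : series b N <= p%:R + T.
      have -> : series b N = \sum_(j <- iota 0 N) b j by rewrite /series /= /index_iota subn0.
      apply: le_trans (@sum_subset_le F (iota 0 N) (map sigma (iota 0 (p + r))) b (iota_uniq _ _) _ _ _) _.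
      - by rewrite map_inj_uniq ?iota_uniq //; exact: can_inj st.
      - move=> j; rewrite mem_iota add0n => /andP[_ jN]; apply/mapP; exists (tau j); last by rewrite ts.
        rewrite mem_iota add0n /=; apply: (leq_trans _ (leq_addl p r)).
        apply: (leq_trans _ hr); rewrite ltnS; apply: leq_bigmax_seq => //.
        by rewrite mem_iota add0n.
      - by move=> j; case/andP: (hb j).
      rewrite iotaD add0n map_cat big_cat /= lerD2r big_map.
      have -> : iota 0 p = index_iota 0 p by rewrite /index_iota subn0.
      rewrite big_mkord; apply: le_trans (_ : _ <= \sum_(i < p) (1 : F)) _.
        by apply: ler_sum => i _; apply: hb1.
      by rewrite sumr_const card_ord.
    rewrite -(ltrD2r p%:R); apply: lt_le_trans hN' _; by rewrite addrC.
  have h := prod1m_le (map sigma (iota p r)) hb.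
  have h2 : \prod_(j <- map sigma (iota p r)) (1 - b j) * e^-1 <= 1.
    apply: le_trans h; apply: ler_wpM2l; first exact: pb0.
    by apply: le_trans (ltW hT) _; rewrite lerDr ler01.
  by move: h2; rewrite ler_pdivrMr // mul1r.
have [K2 [K20 hK2]] := mx_norm_bound hmu.
apply/cvgr0Pnorm_le => eps eps0.
have d0 : 0 < K2 * K + 1 by rewrite ltr_wpDl ?mulr_ge0.
have [R0 hR0] := he (eps / (K2 * K + 1)) (divr_gt0 eps0 d0).
exists (maxn R0 1) => // r /= hr.
have hr1 : (0 < r)%N by apply: leq_trans hr; apply: leq_maxr.
have hr0 : (R0 <= r)%N by apply: leq_trans hr; apply: leq_maxl.
apply: le_trans (hK2 _) _.
apply: le_trans (ler_wpM2l K20 (hCr r hr1)) _.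
apply: le_trans (ler_wpM2l K20 (ler_wpM2l K0 (hR0 r hr0))) _.
rewrite mulrA; set d := eps / _.
apply: le_trans (_ : (K2 * K + 1) * d <= _).
  by apply: ler_wpM2r; [apply: ltW; apply: divr_gt0 | rewrite lerDl ler01].
by rewrite /d mulrC divfK ?lexx // gt_eqF.
Qed.
End Core.

Lemma Hc_real (R : realType) : forall u : nat -> R, (forall i, 0 <= u i) ->
  (exists B, forall N, series u N <= B) -> cvg (series u @ \oo).
Proof.
move=> u u0 [B hB]; apply/cvg_ex; exists (sup (range (series u))).
apply: nondecreasing_cvgn.
  by have := @nondecreasing_series R u predT 0%N (fun n _ _ => u0 n).
by exists B => _ [N _ <-]; apply: hB.
Qed.

Section CX.
Local Open Scope complex_scope.
Lemma normC_real (R : realType) (x : R) : `|x%:C| = `|x|%:C :> R[i].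
Proof. by rewrite normc_def /= expr0n /= addr0 sqrtr_sqr. Qed.

Lemma Hc_complex (R : realType) : forall u : nat -> (complex R : numFieldType), (forall i, 0 <= u i) ->
  (exists B, forall N, series u N <= B) -> cvg (series u @ \oo).
Proof.
move=> u u0 [B hB].
pose v i := @complex.Re R (u i).
have uv i : u i = (v i)%:C by rewrite /v RRe_real // ger0_real.
have sv N : series u N = (series v N)%:C.
  by rewrite /series /= rmorph_sum; apply: eq_bigr => i _; exact: uv.
have v0 i : 0 <= v i by rewrite -ler0c -uv.
have hv : cvg (series v @ \oo).
  apply: Hc_real => //; exists (complex.Re B) => N.
  by have := hB N; rewrite sv lecE => /andP[_].
have [l hl] := (cvg_ex _).1 hv.
apply/cvg_ex; exists l%:C; apply/cvgrPdist_lt => eps eps0.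
have eR : eps = (complex.Re eps)%:C by rewrite RRe_real // gtr0_real.
have e0 : 0 < complex.Re eps by move: eps0; rewrite {1}eR ltcR.
have [N _ hN] := cvgr_dist_lt _ _ hl _ e0.
exists N => // t /= ht.
by rewrite sv -rmorphB normC_real {1}eR ltcR; apply: hN.
Qed.

End CX.

Theorem theorem3p2 :
  (forall R : realType, theorem3p2_prop R) /\
  (forall R : realType, theorem3p2_prop (complex R)).
Proof.
split => R; apply: core; [exact: Hc_real | exact: Hc_complex].
Qed.
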